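(* Let $\rho$ be a representation of $D^{2,2,2}$ and let $\{i,j,k\}=\{1,2,3\}$. 1. Suppose $a,b\in D^{2,2,2}$ satisfy one of the following: (i) $x_i+x_jx_k\subseteq a$; (ii) $x_i+x_jx_k\subseteq b$; (iii) $x_i\subseteq a$ and $x_jx_k\subseteq b$; (iv) $x_i\subseteq b$ and $x_jx_k\subseteq a$. Then $\psi_i(ab)=\psi_i(a)\cap\psi_i(b)$ (and $\psi_i(a+b)=\psi_i(a)+\psi_i(b)$). 2. For every $n\ge 0$ and every $b\in D^{2,2,2}$: $$\psi_i(ba^{ij}_n)=\psi_i(b)\cap\psi_i(a^{ij}_n),\qquad \psi_j(ba^{ij}_n)=\psi_j(b)\cap\psi_j(a^{ij}_n),\qquad \psi_i(bA^{ij}_n)=\psi_i(b)\cap\psi_i(A^{ij}_n).$$ 3. For every $b\in D^{2,2,2}$, $\psi_i(b+x_i)=\psi_i(b)$.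
   Context: $D^{2,2,2}$ is the modular lattice generated by $x_1,y_1,x_2,y_2,x_3,y_3$ subject only to $x_i\subseteq y_i$ ($i=1,2,3$), with a greatest element $I$ adjoined. Meet is written $ab$, join $a+b$. Atomic elements: for distinct $i,j$, let $k$ denote the third index. Define - $a^{ij}_0=I$ and $a^{ij}_n=x_i+y_ja^{jk}_{n-1}$ for $n\ge1$; - $A^{ij}_0=I$ and $A^{ij}_n=y_i+x_jA^{ki}_{n-1}$ for $n\ge1$. A representation $\rho$ of $D^{2,2,2}$ in a finite-dimensional vector space $X_0$ is a lattice morphism from $D^{2,2,2}$ to the subspace lattice of $X_0$, with $\rho(I)=X_0$. Write $X_i=\rho(x_i)\subseteq Y_i=\rho(y_i)$. Put $R=Y_1\oplus Y_2\oplus Y_3$ and $X^1_0=\{(\eta_1,\eta_2,\eta_3)\in R:\sum\eta_i=0\}$. Define subspaces of $R$: - $G_i$: triples with $i$-th coordinate in $Y_i$ and the others $0$; - $G'_i$: triples with $i$-th coordinate in $X_i$; - $H'_i$: triples with $i$-th coordinate $0$. $\Phi^+\rho$ is the representation in $X^1_0$ with $\Phi^+\rho(y_i)=G'_i\cap X^1_0$, $\Phi^+\rho(x_i)=H'_i\cap X^1_0$, $\Phi^+\rho(I)=X^1_0$. Set $\nu^1(a)=\Phi^+\rho(a)\subseteq R$. The joint map is $\psi_i(a)=X^1_0+G_i\cap(H'_i+\nu^1(a))$. *)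

(* Defs.v *)
From HB Require Import structures.
From mathcomp Require Import all_boot all_order all_algebra.
Set Implicit Arguments. Unset Strict Implicit. Unset Printing Implicit Defensive.
Import Order.TTheory GRing.Theory.
Local Open Scope ring_scope.

(* Lattice terms over the generators x_1,y_1,x_2,y_2,x_3,y_3 (indices 'I_3)
   and the adjoined top I.  Elements of D^{2,2,2} are such terms, identified
   up to the equivalence induced by Dle below. *)
Inductive term : Type :=
| Gx of 'I_3
| Gy of 'I_3
| Top
| Meet of term & term
| Join of term & term.

Fixpoint teval (T : Type) (jn mt : T -> T -> T) (top : T)
  (gx gy : 'I_3 -> T) (t : term) : T :=
  match t with
  | Gx l => gx l
  | Gy l => gy l
  | Top => top
  | Meet a b => mt (teval jn mt top gx gy a) (teval jn mt top gx gy b)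
  | Join a b => jn (teval jn mt top gx gy a) (teval jn mt top gx gy b)
  end.

Definition modular_lattice (d : Order.disp_t) (L : tLatticeType d) : Prop :=
  forall x y z : L, (x <= z)%O -> (x `|` (y `&` z))%O = ((x `|` y) `&` z)%O.

(* The order of D^{2,2,2}: a <= b holds in the free modular lattice on
   x_i <= y_i with a top adjoined iff it holds under every valuation in
   every modular lattice with top (sending I to the top). *)
Definition Dle (a b : term) : Prop :=
  forall (d : Order.disp_t) (L : tLatticeType d), modular_lattice L ->
  forall gx gy : 'I_3 -> L, (forall l, (gx l <= gy l)%O) ->
  (teval Order.join Order.meet \top gx gy a <= teval Order.join Order.meet \top gx gy b)%O.

(* the third index k of {i,j,k} = {0,1,2} (for i != j) *)
Definition third (i j : 'I_3) : 'I_3 := inord (3 - i - j)%N.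

Fixpoint atom_a (n : nat) (i j : 'I_3) : term :=
  match n with
  | 0 => Top
  | n'.+1 => Join (Gx i) (Meet (Gy j) (atom_a n' j (third i j)))
  end.

Fixpoint atom_A (n : nat) (i j : 'I_3) : term :=
  match n with
  | 0 => Top
  | n'.+1 => Join (Gy i) (Meet (Gx j) (atom_A n' (third i j) i))
  end.

Section Rep.
Variables (F : fieldType) (vT : vectType F).
(* A representation rho of D^{2,2,2} in X_0 = fullv is determined by
   X_i = rho(x_i) <= Y_i = rho(y_i); rho(a) is the evaluation below. *)
Variables (X Y : 'I_3 -> {vspace vT}).

Definition rep (a : term) : {vspace vT} :=
  teval (fun U V => (U + V)%VS) (fun U V => (U :&: V)%VS) fullv X Y a.

Definition V3 := {ffun 'I_3 -> vT}.

Definition inj (l : 'I_3) (v : vT) : V3 := [ffun m => if m == l then v else 0].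

Definition embed (l : 'I_3) (U : {vspace vT}) : {vspace V3} :=
  (<< map (inj l) (vbasis U) >>)%VS.

Definition Rsp : {vspace V3} := (\sum_(l < 3) embed l (Y l))%VS.

Definition sum3 (f : V3) : vT := \sum_(l < 3) f l.

Definition X10 : {vspace V3} := (Rsp :&: lker (linfun sum3))%VS.

Definition Gsp (i : 'I_3) : {vspace V3} := embed i (Y i).
Definition G'sp (i : 'I_3) : {vspace V3} :=
  (\sum_(l < 3) embed l (if l == i then X l else Y l))%VS.
Definition H'sp (i : 'I_3) : {vspace V3} :=
  (\sum_(l < 3 | l != i) embed l (Y l))%VS.

Definition nu1 (a : term) : {vspace V3} :=
  teval (fun U V => (U + V)%VS) (fun U V => (U :&: V)%VS) X10
    (fun l => H'sp l :&: X10)%VS (fun l => G'sp l :&: X10)%VS a.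

Definition psi (i : 'I_3) (a : term) : {vspace V3} :=
  (X10 + (Gsp i :&: (H'sp i + nu1 a)))%VS.
End Rep.

(* Main.v *)
From HB Require Import structures.
Require Import Defs.
From mathcomp Require Import all_boot all_order all_algebra.
Set Implicit Arguments. Unset Strict Implicit. Unset Printing Implicit Defensive.
Import Order.TTheory GRing.Theory.
Local Open Scope ring_scope.

Section VSL.
Variables (K : fieldType) (W : vectType K).
Definition vsL : Type := {vspace W}.
HB.instance Definition _ := Choice.on vsL.
Lemma vsL_lt_def (x y : vsL) : ((y != x) && (x <= y)%VS) = (y != x) && (x <= y)%VS.
Proof. by []. Qed.
HB.instance Definition _ := Order.isPOrder.Build (Order.Disp tt tt) vsL
  vsL_lt_def ((@subvv K W)) (@subv_anti K W) (@subv_trans K W).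
Lemma vsL_meetP (x y z : vsL) : (x <= (y :&: z)%VS)%VS = (x <= y)%VS && (x <= z)%VS.
Proof. exact: subv_cap. Qed.
Lemma vsL_joinP (x y z : vsL) : ((x + y)%VS <= z)%VS = (x <= z)%VS && (y <= z)%VS.
Proof. exact: subv_add. Qed.
HB.instance Definition _ := Order.POrder_MeetJoin_isLattice.Build (Order.Disp tt tt) vsL
  vsL_meetP vsL_joinP.
HB.instance Definition _ := Order.hasTop.Build (Order.Disp tt tt) vsL (@subvf K W).
Lemma vsL_joinE (x y : vsL) : Order.join x y = (x + y)%VS. Proof. by []. Qed.
Lemma vsL_meetE (x y : vsL) : Order.meet x y = (x :&: y)%VS. Proof. by []. Qed.
Lemma vsL_topE : (Order.top : vsL) = fullv. Proof. by []. Qed.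
Lemma vsL_leE (x y : vsL) : Order.le x y = (x <= y)%VS. Proof. by []. Qed.
End VSL.

Section Abs.
Variables (K : fieldType) (W : vectType K) (G H X : {vspace W}).
Hypotheses (hGH : (G :&: H = 0)%VS) (hGX : (G :&: X = 0)%VS) (hXGH : (X <= G + H)%VS).

Lemma cap0P U V (u : W) : (U :&: V = 0)%VS -> u \in U -> u \in V -> u = 0.
Proof. by move=> E uU uV; apply/eqP; rewrite -memv0 -E memv_cap uU uV. Qed.

Lemma subsubK (w a b : W) : (w - a) - (w - b) = b - a.
Proof. by rewrite opprB addrC addrA addrNK. Qed.

Definition Psi A := (X + (G :&: (H + A)))%VS.

Lemma L1 A : (A <= G + H)%VS -> (H + A = H + (G :&: (H + A)))%VS.
Proof.
move=> AGH; apply/eqP; rewrite eqEsubv; apply/andP; split; last first.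
  by rewrite subv_add addvSl capvSr.
apply/subvP => w /memv_addP [h hH [a aA ->]].
have /memv_addP [ga gaG [ha haH Ea]] := subvP AGH a aA.
have -> : h + a = (h + ha) + ga by rewrite Ea (addrC ga) addrA.
apply: memv_add; first exact: memvD.
rewrite memv_cap gaG /=.
have -> : ga = - ha + a by rewrite Ea addrCA addNr addr0.
by apply: memv_add; rewrite ?memvN.
Qed.

Lemma L2 S : (S <= G)%VS -> (G :&: (H + S) = S)%VS.
Proof.
move=> SG; apply/eqP; rewrite eqEsubv; apply/andP; split; last first.
  by rewrite subv_cap SG addvSr.
apply/subvP => w /memv_capP [wG /memv_addP [h hH [s sS Ew]]].
have h0 : h = 0.
  apply: (cap0P hGH) => //.
  have -> : h = w - s by rewrite Ew addrK.
  by apply: memvB => //; apply: (subvP SG).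
by rewrite Ew h0 add0r.
Qed.

Lemma Psi_add A B : (A <= X)%VS -> (B <= X)%VS -> Psi (A + B) = (Psi A + Psi B)%VS.
Proof.
move=> AX BX.
have AGH : (A <= G + H)%VS by apply: subv_trans hXGH.
have BGH : (B <= G + H)%VS by apply: subv_trans hXGH.
rewrite /Psi.
set P := (G :&: (H + A))%VS; set Q := (G :&: (H + B))%VS.
have -> : (H + (A + B) = H + (P + Q))%VS.
  by rewrite addvA (L1 AGH) -/P -addvA (addvC P) addvA (L1 BGH) -/Q -addvA (addvC Q).
rewrite L2; last by rewrite subv_add !capvSl.
rewrite [in RHS]addvA [in RHS](addvC _ X) [in RHS]addvA addvv.
by rewrite addvA.
Qed.

Lemma L3 P Q : (P <= G)%VS -> (Q <= G)%VS -> ((X + P) :&: (X + Q) = X + (P :&: Q))%VS.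
Proof.
move=> PG QG; apply/eqP; rewrite eqEsubv; apply/andP; split; last first.
  by rewrite subv_cap !addvS ?subvv ?capvSl ?capvSr.
apply/subvP => w /memv_capP [/memv_addP [x1 x1X [p pP E1]] /memv_addP [x2 x2X [q qQ E2]]].
have hp : p = w - x1 by rewrite E1 (addrC x1) addrK.
have hq : q = w - x2 by rewrite E2 (addrC x2) addrK.
have pq : p - q = 0.
  apply: (cap0P hGX); first by apply: memvB; [apply: (subvP PG) | apply: (subvP QG)].
  by rewrite hp hq subsubK memvB.
have epq : p = q by apply/eqP; rewrite -subr_eq0 pq.
rewrite E1; apply: memv_add => //; rewrite memv_cap pP /= epq.
by [].
Qed.

Lemma L4 A B : (A <= X)%VS -> (B <= X)%VS -> (H :&: X <= A)%VS ->
  ((G :&: (H + A)) :&: (G :&: (H + B)) <= G :&: (H + (A :&: B)))%VS.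
Proof.
move=> AX BX KA; apply/subvP => g.
rewrite !memv_cap => /andP[/andP[gG /memv_addP [h1 h1H [a aA E1]]] /andP[_ /memv_addP [h2 h2H [b bB E2]]]].
rewrite gG /=.
have ha : a = g - h1 by rewrite E1 (addrC h1) addrK.
have hb : b = g - h2 by rewrite E2 (addrC h2) addrK.
have abK : a - b \in A.
  apply: (subvP KA); rewrite memv_cap; apply/andP; split.
    by rewrite ha hb subsubK memvB.
  by apply: memvB; [apply: (subvP AX) | apply: (subvP BX)].
have bA : b \in A.
  have -> : b = a - (a - b) by rewrite opprB addrC addrNK.
  exact: memvB.
by rewrite E2; apply: memv_add => //; rewrite memv_cap bA.
Qed.

Lemma Psi_cap A B : (A <= X)%VS -> (B <= X)%VS -> (H :&: X <= A)%VS ->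
  Psi (A :&: B) = (Psi A :&: Psi B)%VS.
Proof.
move=> AX BX KA; apply/eqP; rewrite eqEsubv; apply/andP; split.
  rewrite subv_cap /Psi; apply/andP; split; apply: addvS => //; apply: capvS => //;
  apply: addvS => //; [exact: capvSl | exact: capvSr].
rewrite /Psi L3 ?capvSl //; apply: addvS => //; exact: L4.
Qed.

Lemma Psi_K A : Psi (A + (H :&: X)) = Psi A.
Proof.
rewrite /Psi addvA (addvC H) -addvA.
by have /addv_idPl -> : ((H :&: X) <= H)%VS by exact: capvSl.
Qed.
End Abs.

Lemma vsL_modular (K : fieldType) (W : vectType K) : modular_lattice (vsL W).
Proof.
move=> x y z; rewrite vsL_leE => xz; rewrite !vsL_joinE !vsL_meetE.
apply/eqP; rewrite eqEsubv; apply/andP; split.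
  rewrite subv_cap !subv_add addvSl capvSr (subv_trans (capvSl y z) (addvSr x y)) /=; rewrite andbT; exact: xz.
apply/subvP => w; rewrite memv_cap => /andP[/memv_addP [a ax [b yb Ew]] wz].
rewrite Ew; apply: memv_add => //; rewrite memv_cap yb /=.
have -> : b = w - a by rewrite Ew (addrC a) addrK.
by apply: memvB => //; apply: (subvP xz).
Qed.

Section Conc.
Variables (F : fieldType) (vT : vectType F) (X Y : 'I_3 -> {vspace vT}).
Hypothesis hXY : forall l, (X l <= Y l)%VS.

Lemma inj_lin l : linear (@inj F vT l).
Proof.
move=> a u v; apply/ffunP=> m; rewrite !ffunE.
by case: (m == l); rewrite ?scaler0 ?addr0.
Qed.
HB.instance Definition _ l := GRing.isLinear.Build F vT (V3 vT) *:%R (@inj F vT l) (inj_lin l).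

Lemma sum3_lin : linear (@sum3 F vT).
Proof.
move=> a u v; rewrite /sum3 scaler_sumr -big_split; apply: eq_bigr => m _.
by rewrite !ffunE.
Qed.
HB.instance Definition _ := GRing.isLinear.Build F (V3 vT) vT *:%R (@sum3 F vT) sum3_lin.

Lemma embedE l U : embed l U = (linfun (@inj F vT l) @: U)%VS.
Proof.
transitivity (linfun (@inj F vT l) @: <<vbasis U>>)%VS; last first.
  by rewrite (span_basis (vbasisP U)).
rewrite limg_span /embed; congr (<< _ >>%VS).
by apply: eq_map => x; rewrite lfunE.
Qed.

Lemma mem_embed l (U : {vspace vT}) v : v \in embed l U -> exists2 u, u \in U & v = inj l u.
Proof. by rewrite embedE => /memv_imgP [u uU ->]; exists u; rewrite ?lfunE. Qed.

Lemma inj_mem l (U : {vspace vT}) u : u \in U -> inj l u \in embed l U.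
Proof. by move=> uU; rewrite embedE; have := memv_img (linfun (@inj F vT l)) uU; rewrite lfunE. Qed.

Lemma injE l (u : vT) m : inj l u m = if m == l then u else 0.
Proof. by rewrite ffunE. Qed.

Lemma memG l v : v \in Gsp Y l -> v = inj l (v l).
Proof. by move=> /mem_embed [u _ ->]; rewrite injE eqxx. Qed.

Lemma memH l v : v \in H'sp Y l -> v l = 0.
Proof.
move=> /memv_sumP [vs Hvs ->]; rewrite sum_ffunE big1 // => m hm.
by have [u _ ->] := mem_embed (Hvs m hm); rewrite injE eq_sym (negbTE hm).
Qed.

Lemma sum3_inj l (u : vT) : sum3 (inj l u) = u.
Proof.
rewrite /sum3 (bigD1 l) //= injE eqxx big1 ?addr0 // => m hm.
by rewrite injE (negbTE hm).
Qed.

Lemma memX v : v \in X10 Y -> sum3 v = 0.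
Proof. by rewrite /X10 memv_cap memv_ker lfunE => /andP[_ /eqP]. Qed.

Lemma C1 l : (Gsp Y l :&: H'sp Y l = 0)%VS.
Proof.
apply/eqP; rewrite -subv0; apply/subvP => v; rewrite memv_cap memv0 => /andP[vG vH].
by rewrite (memG vG) (memH vH) linear0.
Qed.

Lemma C2 l : (Gsp Y l :&: X10 Y = 0)%VS.
Proof.
apply/eqP; rewrite -subv0; apply/subvP => v; rewrite memv_cap memv0 => /andP[vG vX].
have := memX vX; rewrite (memG vG) sum3_inj => ->.
by rewrite linear0.
Qed.

Lemma C3 l : (X10 Y <= Gsp Y l + H'sp Y l)%VS.
Proof. by apply: subv_trans (capvSl _ _) _; rewrite /Rsp (bigD1 l) //=. Qed.

Lemma C4 a : (nu1 X Y a <= X10 Y)%VS.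
Proof.
elim: a => [l|l||a IHa b IHb|a IHa b IHb] /=; rewrite ?capvSr ?subvv //.
  exact: subv_trans (capvSl _ _) IHa.
by rewrite subv_add IHa.
Qed.

Lemma HG' l : (H'sp Y l <= G'sp X Y l)%VS.
Proof.
apply/subv_sumP => m hm; apply: (sumv_sup m) => //.
by rewrite (negbTE hm) subvv.
Qed.

End Conc.

Section Conc2.
Variables (F : fieldType) (vT : vectType F) (X Y : 'I_3 -> {vspace vT}).

Definition gx l := (H'sp Y l :&: X10 Y)%VS.
Definition gy l := (G'sp X Y l :&: X10 Y)%VS.
Definition tf t := teval (fun U V => (U + V)%VS) (fun U V => (U :&: V)%VS) fullv gx gy t.

Lemma phi t : ((tf t <= X10 Y)%VS /\ nu1 X Y t = tf t) \/ (tf t = fullv /\ nu1 X Y t = X10 Y).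
Proof.
elim: t => [l|l||a IHa b IHb|a IHa b IHb].
- by left; split; rewrite //= /gx capvSr.
- by left; split; rewrite //= /gy capvSr.
- by right.
- change (tf (Meet a b)) with (tf a :&: tf b)%VS; change (nu1 X Y (Meet a b)) with (nu1 X Y a :&: nu1 X Y b)%VS.
  case: IHa => [[aX ->]|[-> ->]]; case: IHb => [[bX ->]|[-> ->]].
  + by left; split => //; apply: subv_trans (capvSl _ _) aX.
  + by left; rewrite capvf; split => //; apply/capv_idPl.
  + by left; rewrite (capvC fullv) capvf; split => //; rewrite capvC; apply/capv_idPl.
  + by right; rewrite !capvv.
- change (tf (Join a b)) with (tf a + tf b)%VS; change (nu1 X Y (Join a b)) with (nu1 X Y a + nu1 X Y b)%VS.
  case: IHa => [[aX ->]|[-> ->]]; case: IHb => [[bX ->]|[-> ->]].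
  + by left; split => //; rewrite subv_add aX.
  + by right; rewrite addvf addvC; split => //; apply/addv_idPl.
  + by right; rewrite (addvC fullv) addvf; split => //; apply/addv_idPl.
  + by right; rewrite !addvv.
Qed.

Lemma hle l : (gx l <= gy l)%VS.
Proof. by apply: capvS => //; apply: HG'. Qed.

Lemma Dle_nu t a : Dle t a -> (nu1 X Y t <= nu1 X Y a)%VS.
Proof.
move=> D.
have Htf : (tf t <= tf a)%VS := D _ (vsL (V3 vT)) (@vsL_modular _ _) gx gy hle.
case: (phi a) => [[aX ->]|[_ ->]]; last exact: C4.
case: (phi t) => [[tX ->]|[tfE ->]] //.
rewrite tfE in Htf.
by apply: subv_trans (subvf _) Htf.
Qed.
End Conc2.

Section Main.
Variables (F : fieldType) (vT : vectType F) (X Y : 'I_3 -> {vspace vT}).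
Local Notation K l := (H'sp Y l :&: X10 Y)%VS.

Lemma psiE l a : psi X Y l a = Psi (Gsp Y l) (H'sp Y l) (X10 Y) (nu1 X Y a).
Proof. by []. Qed.

Lemma psi_add l a b : psi X Y l (Join a b) = (psi X Y l a + psi X Y l b)%VS.
Proof. by rewrite !psiE; apply: Psi_add; [apply: C1|apply: C3|apply: C4|apply: C4]. Qed.

Lemma psi_cap l a b : (K l <= nu1 X Y a)%VS \/ (K l <= nu1 X Y b)%VS ->
  psi X Y l (Meet a b) = (psi X Y l a :&: psi X Y l b)%VS.
Proof.
rewrite !psiE => -[hK|hK].
  by apply: Psi_cap; [apply: C2|apply: C4|apply: C4|].
rewrite capvC; change (nu1 X Y (Meet a b)) with (nu1 X Y a :&: nu1 X Y b)%VS.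
rewrite capvC.
by apply: Psi_cap; [apply: C2|apply: C4|apply: C4|].
Qed.

Lemma psi_K l b : psi X Y l (Join b (Gx l)) = psi X Y l b.
Proof. by rewrite !psiE; apply: Psi_K. Qed.

Lemma Ka n l m : (K l <= nu1 X Y (atom_a n l m))%VS.
Proof. by case: n => [|n]; [exact: capvSr | exact: addvSl]. Qed.

Lemma Kaj n l m : (K m <= nu1 X Y (atom_a n l m))%VS.
Proof.
case: n => [|n]; first exact: capvSr.
apply: subv_trans (addvSr _ _); rewrite subv_cap Ka andbT.
exact: (hle X Y m).
Qed.

Lemma KA n l m : (K l <= nu1 X Y (atom_A n l m))%VS.
Proof.
case: n => [|n]; first exact: capvSr.
apply: subv_trans (addvSl _ _); exact: (hle X Y l).
Qed.
End Main.

Theorem mainTheorem6 (F : fieldType) (vT : vectType F)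
  (X Y : 'I_3 -> {vspace vT}) (hXY : forall l, (X l <= Y l)%VS)
  (i j k : 'I_3) (hij : i != j) (hjk : j != k) (hik : i != k) :
  (forall a b : term,
     [\/ Dle (Join (Gx i) (Meet (Gx j) (Gx k))) a,
         Dle (Join (Gx i) (Meet (Gx j) (Gx k))) b,
         Dle (Gx i) a /\ Dle (Meet (Gx j) (Gx k)) b
       | Dle (Gx i) b /\ Dle (Meet (Gx j) (Gx k)) a] ->
     psi X Y i (Meet a b) = (psi X Y i a :&: psi X Y i b)%VS /\
     psi X Y i (Join a b) = (psi X Y i a + psi X Y i b)%VS)
  /\
  (forall (n : nat) (b : term),
     [/\ psi X Y i (Meet b (atom_a n i j)) = (psi X Y i b :&: psi X Y i (atom_a n i j))%VS,
         psi X Y j (Meet b (atom_a n i j)) = (psi X Y j b :&: psi X Y j (atom_a n i j))%VS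
       & psi X Y i (Meet b (atom_A n i j)) = (psi X Y i b :&: psi X Y i (atom_A n i j))%VS])
  /\
  (forall b : term, psi X Y i (Join b (Gx i)) = psi X Y i b).
Proof.
split; [|split].
- move=> a b hc; split; last exact: psi_add.
  apply: psi_cap.
  have K1 : forall t, Dle (Gx i) t -> (H'sp Y i :&: X10 Y <= nu1 X Y t)%VS.
    by move=> t D; exact: (Dle_nu X Y D).
  have K2 : forall t, Dle (Join (Gx i) (Meet (Gx j) (Gx k))) t ->
      (H'sp Y i :&: X10 Y <= nu1 X Y t)%VS.
    by move=> t D; apply: subv_trans (Dle_nu X Y D); exact: addvSl.
  case: hc => [D|D|[D _]|[D _]]; [left|right|left|right]; auto.
- move=> n b; split; apply: psi_cap; right; [exact: Ka|exact: Kaj|exact: KA].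
- exact: psi_K.
Qed.
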